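(* Let $w=w_1\cdots w_n$ be a word of distinct positive integers avoiding $31245,32145,31254,32154$, with positions of left-to-right maxima $l_1<\dots<l_s$ and of right-to-left maxima $r_1<\dots<r_t$ ($l_s=r_1$). Assume $t>1$, $l_s>s$, $s>2$ and $w_{l_{s-1}}>w_{r_2}$. Let $x=\max(\{j: 1\le j<l_{s-1},\ w_j>w_{j+1}\}\cup\{0\})$. Then one of the following holds: (II-1) $x=0$; (II-2) $x\ne0$ and $l_s=l_{s-1}+1$; (II-3) $x\neq0$, $l_s>l_{s-1}+1$, the set $\{i: l_{s-1}<i<l_s,\ w_x<w_i<w_{l_{s-1}}\}$ is nonempty, and with $k$ its maximum we have $w_x<w_j<w_{l_{s-1}}$ for all $l_{s-1}<j\le k$ and $w_j<w_x$ for all $k<j<l_s$; moreover, if $k<l_s-1$ then $w_x>w_{r_2}$; (II-4) $x\ne0$, $l_s>l_{s-1}+1$, $w_j<w_x$ for all $l_{s-1}<j<l_s$, and $w_x>w_{r_2}$.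
   Context: A word of distinct positive integers avoids a pattern $P$ (a permutation of $[m]$) if no subsequence of length $m$ is order-isomorphic to $P$. A left-to-right (resp. right-to-left) maximum of $w$ is a letter $w_i$ greater than all letters to its left (resp. right). *)

(* Defs.v *)
From mathcomp Require Import all_boot.
Set Implicit Arguments. Unset Strict Implicit. Unset Printing Implicit Defensive.

(* A word w = w_1 ... w_n is a seq nat; letters are 1-indexed. *)
Definition letter (w : seq nat) (i : nat) : nat := nth 0 w i.-1.

Definition order_iso (u P : seq nat) : Prop :=
  size u = size P /\
  forall i j, i < size u -> j < size u -> (nth 0 u i < nth 0 u j) = (nth 0 P i < nth 0 P j).

Definition avoids (w P : seq nat) : Prop :=
  forall u : seq nat, subseq u w -> ~ order_iso u P.

Definition ltr_max_pos (w : seq nat) : seq nat :=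
  [seq i <- iota 1 (size w) |
     all (fun j => letter w j < letter w i) (iota 1 i.-1)].

Definition rtl_max_pos (w : seq nat) : seq nat :=
  [seq i <- iota 1 (size w) |
     all (fun j => letter w j < letter w i) (iota i.+1 (size w - i))].

Definition lpos (w : seq nat) (k : nat) : nat := nth 0 (ltr_max_pos w) k.-1.
Definition rpos (w : seq nat) (k : nat) : nat := nth 0 (rtl_max_pos w) k.-1.

Definition xdesc (w : seq nat) (L : nat) : nat :=
  \max_(1 <= j < L | letter w j.+1 < letter w j) j.

(* Main.v *)
Require Import Defs.
From mathcomp Require Import all_boot zify.

Lemma subseq_nths (w : seq nat) k (idx : seq nat) :
  sorted ltn idx -> all (fun i => k <= i < k + size w) idx ->
  subseq [seq nth 0 w (i - k) | i <- idx] w.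
Proof.
elim: w k idx => [|a w IH] k [|i idx] //.
- by move=> _ /andP[/andP[h1 h2] _]; move: h2; rewrite /= addn0; lia.
- move=> hp /andP[/andP[h1 h2] hall].
  have hgt : all (ltn i) idx by apply: order_path_min hp; exact: ltn_trans.
  have hs : sorted ltn idx by apply: path_sorted hp.
  have hall' : all (fun j => k.+1 <= j < k.+1 + size w) idx.
    apply/allP => j hj; move/allP: hall => /(_ j hj); move/allP: hgt => /(_ j hj).
    rewrite /= /=; lia.
  case: (ltnP k i) => hki.
  + have -> : [seq nth 0 (a :: w) (i0 - k) | i0 <- i :: idx] =
              [seq nth 0 w (i0 - k.+1) | i0 <- i :: idx].
      apply/eq_in_map => j; rewrite inE => /orP[/eqP ->|hj].
        by rewrite -subnSK.
      move/allP: hgt => /(_ j hj) /= hij.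
      by rewrite -(subnSK (leq_trans hki (ltnW hij))).
    apply: (subseq_trans _ (subseq_cons w a)).
    apply: IH => //=.
    rewrite /= hall' andbT; move: h1 h2 hki; rewrite /=; lia.
  + have -> : i = k by lia.
    rewrite /= subnn /= eqxx.
    have -> : [seq nth 0 (a :: w) (i0 - k) | i0 <- idx] =
              [seq nth 0 w (i0 - k.+1) | i0 <- idx].
      apply/eq_in_map => j hj.
      move/allP: hgt => /(_ j hj) /= hij.
      by rewrite -(subnSK (_ : k < j)) //; lia.
    exact: IH.
Qed.

Lemma letter_inj (w : seq nat) i j : uniq w -> 1 <= i <= size w -> 1 <= j <= size w ->
  letter w i = letter w j -> i = j.
Proof.
move=> u; case: i => [|i]; case: j => [|j] //=; move=> hi hj /eqP; rewrite /letter nth_uniq //= ?ltnS; try lia; by move/eqP ->.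

Qed.

Lemma no_pat (w : seq nat) a b c d e : uniq w ->
  avoids w [:: 3; 1; 2; 4; 5] -> avoids w [:: 3; 2; 1; 4; 5] ->
  avoids w [:: 3; 1; 2; 5; 4] -> avoids w [:: 3; 2; 1; 5; 4] ->
  1 <= a -> a < b -> b < c -> c < d -> d < e -> e <= size w ->
  letter w b < letter w a -> letter w c < letter w a ->
  letter w a < letter w d -> letter w a < letter w e -> False.
Proof.
move=> u A1 A2 A3 A4 ha hab hbc hcd hde hen h1 h2 h3 h4.
set u5 := [:: letter w a; letter w b; letter w c; letter w d; letter w e].
have hsub : subseq u5 w.
  have := @subseq_nths w 1 [:: a; b; c; d; e].
  rewrite /= !subn1; apply; repeat (apply/andP; split); lia.
have hbc' : letter w b != letter w c.
  apply/eqP => H; have := @letter_inj w b c u ltac:(lia) ltac:(lia) H; lia.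
have hde' : letter w d != letter w e.
  apply/eqP => H; have := @letter_inj w d e u ltac:(lia) ltac:(lia) H; lia.
move: (letter w a) (letter w b) (letter w c) (letter w d) (letter w e)
  h1 h2 h3 h4 hbc' hde' @u5 hsub => va vb vc vd ve h1 h2 h3 h4 n1 n2 u5 hsub.
case: (ltnP vb vc) => c1; case: (ltnP vd ve) => c2.
- apply: (A1 _ hsub); split => // i j hi hj.
  do 5?[case: i hi => [|i] hi]; do 5?[case: j hj => [|j] hj]; rewrite //=; lia.
- apply: (A3 _ hsub); split => // i j hi hj.
  do 5?[case: i hi => [|i] hi]; do 5?[case: j hj => [|j] hj]; rewrite //=; lia.
- apply: (A2 _ hsub); split => // i j hi hj.
  do 5?[case: i hi => [|i] hi]; do 5?[case: j hj => [|j] hj]; rewrite //=; lia.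
- apply: (A4 _ hsub); split => // i j hi hj.
  do 5?[case: i hi => [|i] hi]; do 5?[case: j hj => [|j] hj]; rewrite //=; lia.
Qed.

Lemma mem_ltr (w : seq nat) i : i \in ltr_max_pos w ->
  (1 <= i <= size w) /\ (forall j, 1 <= j < i -> letter w j < letter w i).
Proof.
rewrite mem_filter mem_iota => /andP[/allP H hi]; split; first lia.
move=> j hj; apply: H; rewrite mem_iota; lia.
Qed.

Lemma notmem_ltr (w : seq nat) i : 1 <= i <= size w -> i \notin ltr_max_pos w ->
  exists2 j, 1 <= j < i & letter w i <= letter w j.
Proof.
move=> hi; rewrite mem_filter mem_iota.
have -> : (1 <= i < 1 + size w) = true by lia.
rewrite andbT => /allPn [j hj]; rewrite -leqNgt => hle; exists j => //.
move: hj; rewrite mem_iota; lia.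
Qed.

Lemma mem_rtl (w : seq nat) i : i \in rtl_max_pos w ->
  (1 <= i <= size w) /\ (forall j, i < j <= size w -> letter w j < letter w i).
Proof.
rewrite mem_filter mem_iota => /andP[/allP H hi]; split; first lia.
move=> j hj; apply: H; rewrite mem_iota; lia.
Qed.

Lemma nth_lt (s : seq nat) i k : sorted ltn s -> i < size s -> k < size s ->
  (nth 0 s i < nth 0 s k) = (i < k).
Proof.
move=> hs hi hk; case: (ltnP i k) => h.
  by apply: (sorted_ltn_nth ltn_trans 0 hs); rewrite ?inE.
case: (ltngtP k i) h => // h _.
  by apply/negbTE; rewrite -leqNgt ltnW //; apply: (sorted_ltn_nth ltn_trans 0 hs); rewrite ?inE.
by rewrite h ltnn.
Qed.

Lemma ltr_sorted w : sorted ltn (ltr_max_pos w).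
Proof. apply: sorted_filter; [exact: ltn_trans | exact: iota_ltn_sorted]. Qed.

Lemma rtl_sorted w : sorted ltn (rtl_max_pos w).
Proof. apply: sorted_filter; [exact: ltn_trans | exact: iota_ltn_sorted]. Qed.

Lemma bigmax_mem (r : seq nat) (P : pred nat) :
  \max_(j <- r | P j) j = 0 \/
  (\max_(j <- r | P j) j \in r /\ P (\max_(j <- r | P j) j)).
Proof.
elim: r => [|a r IH]; first by left; rewrite big_nil.
rewrite big_cons; move: (\max_(j <- r | P j) j) IH => m IH; case: ifP => Pa.
  case: IH => [->|[hm hP]].
    by right; rewrite maxn0 inE eqxx.
  right; case: (leqP a m) => h.
    by rewrite inE hm orbT.
  by rewrite inE eqxx.
case: IH => [->|[hm hP]]; first by left.
by right; rewrite inE hm orbT.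
Qed.

Theorem lemma3p2 (w : seq nat) :
  uniq w -> 0 \notin w ->
  avoids w [:: 3; 1; 2; 4; 5] -> avoids w [:: 3; 2; 1; 4; 5] ->
  avoids w [:: 3; 1; 2; 5; 4] -> avoids w [:: 3; 2; 1; 5; 4] ->
  let s := size (ltr_max_pos w) in
  let t := size (rtl_max_pos w) in
  let ls := lpos w s in
  let ls1 := lpos w s.-1 in
  let r2 := rpos w 2 in
  let x := xdesc w ls1 in
  1 < t -> s < ls -> 2 < s -> letter w r2 < letter w ls1 ->
  (* (II-1) *)
  x = 0
  \/
  (* (II-2) *)
  (x != 0 /\ ls = ls1.+1)
  \/
  (* (II-3) *)
  (x != 0 /\ ls1.+1 < ls /\
   exists k,
     [/\ (ls1 < k < ls) /\ (letter w x < letter w k < letter w ls1),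
         (forall i, ls1 < i < ls -> letter w x < letter w i < letter w ls1 -> i <= k),
         (forall j, ls1 < j <= k -> letter w x < letter w j < letter w ls1),
         (forall j, k < j < ls -> letter w j < letter w x) &
         (k < ls.-1 -> letter w r2 < letter w x)])
  \/
  (* (II-4) *)
  [/\ x != 0, ls1.+1 < ls,
      (forall j, ls1 < j < ls -> letter w j < letter w x) &
      letter w r2 < letter w x].
Proof.
move=> u n0 A1 A2 A3 A4 s t ls ls1 r2 x ht hsls hs hr2.
have hLs := ltr_sorted w.
have es : s = size (ltr_max_pos w) by [].
have et : t = size (rtl_max_pos w) by [].
have [hls1 hls1m] : (1 <= ls1 <= size w) /\ (forall j, 1 <= j < ls1 -> letter w j < letter w ls1).
  by apply: mem_ltr; rewrite /ls1 /lpos mem_nth // -es; lia.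
have [hls hlsm] : (1 <= ls <= size w) /\ (forall j, 1 <= j < ls -> letter w j < letter w ls).
  by apply: mem_ltr; rewrite /ls /lpos mem_nth // -es; lia.
have hlt : ls1 < ls by rewrite /ls /ls1 /lpos nth_lt //; lia.
have hnot : forall j, ls1 < j < ls -> j \notin ltr_max_pos w.
  move=> j hj; apply/negP => hjin.
  have hi : index j (ltr_max_pos w) < s by rewrite /s index_mem.
  have := nth_index 0 hjin => E.
  move: hj; rewrite /ls /ls1 /lpos -{1 2}E !nth_lt //; lia.
have F3 : forall j, ls1 < j < ls -> letter w j < letter w ls1.
  have : forall m j, j < m -> ls1 < j < ls -> letter w j < letter w ls1.
    elim=> [|m IH] j // hjm hj.
    have hjb : 1 <= j <= size w by lia.
    have [j' hj' hle] := @notmem_ltr w j hjb (hnot j hj).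
    case: (ltnP ls1 j') => h.
      have := IH j' ltac:(lia) ltac:(lia); lia.
    case: (ltngtP j' ls1) h => // h _.
      have := hls1m j' ltac:(lia); lia.
    subst j'.
    case: (ltngtP (letter w j) (letter w ls1)) hle => // E _.
    have := @letter_inj w j ls1 u ltac:(lia) ltac:(lia) E; lia.
  by move=> H j hj; apply: (H j.+1).
have hRs := rtl_sorted w.
have [hr2b hr2m] : (1 <= r2 <= size w) /\ (forall j, r2 < j <= size w -> letter w j < letter w r2).
  by apply: mem_rtl; rewrite /r2 /rpos mem_nth // -et; lia.
have [hr1b hr1m] : (1 <= rpos w 1 <= size w) /\ (forall j, rpos w 1 < j <= size w -> letter w j < letter w (rpos w 1)).
  by apply: mem_rtl; rewrite /rpos mem_nth // -et; lia.
have hr12 : rpos w 1 < r2 by rewrite /r2 /rpos nth_lt // -et; lia.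
have hlsr2 : ls < r2.
  case: (ltngtP ls r2) => // h.
    have := hr2m ls ltac:(lia); have := hlsm r2 ltac:(lia); lia.
  have := hr1m ls ltac:(lia); have := hlsm (rpos w 1) ltac:(lia); lia.
case: (eqVneq x 0) => hx0; first by left.
right.
have [hx hxd] : 1 <= x < ls1 /\ letter w x.+1 < letter w x.
  case: (bigmax_mem (index_iota 1 ls1) (fun j => letter w j.+1 < letter w j)).
    by rewrite -/(xdesc w ls1) -/x => E; rewrite E eqxx in hx0.
  by rewrite -/(xdesc w ls1) -/x mem_index_iota.
case: (eqVneq ls ls1.+1) => hls2; first by left.
right.
have hlt2 : ls1.+1 < ls by lia.
have neq : forall i j, 1 <= i <= size w -> 1 <= j <= size w -> i != j -> letter w i != letter w j.
  move=> i j hi hj hij; apply/eqP => E; have := @letter_inj w i j u hi hj E; lia.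
have pat := @no_pat w _ _ _ _ _ u A1 A2 A3 A4.
set P := fun i => (ls1 < i) && (i < ls) && (letter w x < letter w i).
case: (boolP (has P (iota 0 ls))) => hP.
- left; split => //; split => //.
  have exP : exists i, P i by case/hasP: hP => i _ Pi; exists i.
  have ubP : forall i, P i -> i <= ls by move=> i /andP[/andP[_ h] _]; lia.
  case: (ex_maxnP exP ubP) => k Pk kmax.
  move: (Pk) => /andP[/andP[hk1 hk2] hk3].
  have H4 : forall j, k < j < ls -> letter w j < letter w x.
    move=> j hj.
    have hnP : ~~ P j by apply/negP => /kmax; lia.
    have hne := neq j x ltac:(lia) ltac:(lia) ltac:(lia).
    have e1 : (ls1 < j) = true by lia.
    have e2 : (j < ls) = true by lia.
    move: hnP; rewrite /P e1 e2 /= -leqNgt => hle.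
    by rewrite ltn_neqAle hne hle.
  exists k; split.
  + by split; rewrite ?hk1 ?hk2 ?hk3 ?F3 //; lia.
  + by move=> i hi /andP[hi1 _]; apply: kmax; rewrite /P hi hi1.
  + move=> j hj; rewrite F3 ?andbT; last by lia.
    case: (eqVneq j k) => [->//|hjk].
    case: (ltnP (letter w x) (letter w j)) => // hle.
    have hne := neq j x ltac:(lia) ltac:(lia) ltac:(lia).
    have hlt' : letter w j < letter w x by rewrite ltn_neqAle hne hle.
    have := hlsm x ltac:(lia) => hxls.
    exfalso; apply: (pat x x.+1 j k ls); lia.
  + exact: H4.
  + move=> hk.
    have := H4 k.+1 ltac:(lia) => hk1'.
    case: (ltnP (letter w r2) (letter w x)) => // hle.
    have hne := neq r2 x ltac:(lia) ltac:(lia) ltac:(lia).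
    have hlt' : letter w x < letter w r2 by rewrite ltn_neqAle eq_sym hne hle.
    have := hlsm x ltac:(lia) => hxls.
    exfalso; apply: (pat x x.+1 k.+1 ls r2); lia.
- right.
  have H4 : forall j, ls1 < j < ls -> letter w j < letter w x.
    move=> j hj.
    have hnP : ~~ P j by apply: (hasPn hP); rewrite mem_iota; lia.
    have hne := neq j x ltac:(lia) ltac:(lia) ltac:(lia).
    have e1 : (ls1 < j) = true by lia.
    have e2 : (j < ls) = true by lia.
    move: hnP; rewrite /P e1 e2 /= -leqNgt => hle.
    by rewrite ltn_neqAle hne hle.
  split => //.
  have := H4 ls1.+1 ltac:(lia) => hk1'.
  case: (ltnP (letter w r2) (letter w x)) => // hle.
  have hne := neq r2 x ltac:(lia) ltac:(lia) ltac:(lia).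
  have hlt' : letter w x < letter w r2 by rewrite ltn_neqAle eq_sym hne hle.
  have := hlsm x ltac:(lia) => hxls.
  exfalso; apply: (pat x x.+1 ls1.+1 ls r2); lia.
Qed.
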